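(* For any non-negative integer $n$ there exists a function $\varphi\in\mathcal{S}(\mathbf{R})$, $\varphi\not\equiv 0$, satisfying the system of non-linear equations $$\int_{-\infty}^{+\infty} x^k \varphi(x)\,dx=\frac{\int_{-\infty}^{+\infty} x^k \varphi^2(x)\,dx}{\int_{-\infty}^{+\infty} \varphi^2(x)\,dx},\qquad k=0,1,2,\ldots,n.$$
   Context: $\mathcal{S}(\mathbf{R})$ denotes the Schwartz space of rapidly decreasing smooth real-valued functions on $\mathbf{R}$. *)

(* Defs.v *)
From Stdlib Require Import Reals.
From Coquelicot Require Import Coquelicot.
Open Scope R_scope.

Definition schwartz (f : R -> R) : Prop :=
  (forall (k : nat) (x : R), ex_derive_n f k x) /\
  (forall m k : nat, exists C : R, forall x : R, Rabs (x ^ m * Derive_n f k x) <= C).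

Definition integral_R (f : R -> R) (l : R) : Prop :=
  is_RInt_gen f (Rbar_locally m_infty) (Rbar_locally p_infty) l.

(* Main.v *)
Require Import Defs.
From Stdlib Require Import Reals Lra Lia FunctionalExtensionality.
From Coquelicot Require Import Coquelicot.
Open Scope R_scope.

Definition RD (f : R -> R) := forall m : nat, exists C, forall x, Rabs (x ^ m * f x) <= C.
Definition Dcl (A : (R -> R) -> Prop) :=
  forall f, A f -> exists f', A f' /\ forall x, is_derive f x (f' x).

Lemma Dcl_n A f : Dcl A -> A f -> forall k, A (Derive_n f k) /\ forall x, ex_derive_n f k x.
Proof.
  intros HD Hf k; induction k as [|k [HA _]].
  - split; [exact Hf | intros; exact I].
  - destruct (HD _ HA) as [f' [Hf' Hd]].
    assert (E : Derive_n f (S k) = f').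
    { apply functional_extensionality; intro x; simpl.
      apply is_derive_unique, Hd. }
    split; [rewrite E; exact Hf'|].
    intro x; simpl; exists (f' x); apply Hd.
Qed.

Lemma Dcl_step A f : Dcl A -> A f -> forall j x, is_derive (Derive_n f j) x (Derive_n f (S j) x).
Proof.
  intros HD Hf j x.
  destruct (Dcl_n A f HD Hf j) as [HA _].
  destruct (HD _ HA) as [f' [_ Hd]].
  simpl. rewrite (is_derive_unique _ _ _ (Hd x)). apply Hd.
Qed.

Lemma schwartz_of A f : Dcl A -> (forall g, A g -> RD g) -> A f -> schwartz f.
Proof.
  intros HD HR Hf; split.
  - intros k x; apply (Dcl_n A f HD Hf k).
  - intros m k. destruct (Dcl_n A f HD Hf k) as [HA _]. apply (HR _ HA m).
Qed.

Lemma Dcl_cont A f : Dcl A -> A f -> forall x, continuous f x.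
Proof.
  intros HD Hf x. destruct (HD _ Hf) as [f' [_ Hd]].
  apply (@ex_derive_continuous R_AbsRing R_NormedModule). exists (f' x); apply Hd.
Qed.

Lemma mono_deriv F f : (forall x, is_derive F x (f x)) -> (forall x, 0 <= f x) ->
  forall x y, x <= y -> F x <= F y.
Proof.
  intros Hd Hp x y Hxy.
  destruct (Req_dec x y) as [->|Hne]; [lra|].
  destruct (MVT_gen F x y f) as [c [_ Hc]].
  - intros; apply Hd.
  - intros z _. apply continuity_pt_filterlim. apply (@ex_derive_continuous R_AbsRing R_NormedModule).
    exists (f z); apply Hd.
  - specialize (Hp c). nra.
Qed.

Lemma ball_R (a e b : R) : ball a e b <-> Rabs (b - a) < e.
Proof. reflexivity. Qed.

Lemma lim_pinf G M : (forall x y, x <= y -> G x <= G y) -> (forall x, G x <= M) ->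
  exists L, filterlim G (Rbar_locally p_infty) (locally L).
Proof.
  intros Hm Hb.
  set (E := fun r => exists x, r = G x).
  assert (HE : bound E). { exists M; intros r [x ->]; apply Hb. }
  assert (HE' : exists r, E r). { exists (G 0), 0; reflexivity. }
  destruct (completeness E HE HE') as [L [HL1 HL2]].
  exists L. apply filterlim_locally. intros eps.
  assert (H : exists x0, L - eps < G x0).
  { apply Classical_Prop.NNPP; intro Hn.
    assert (L <= L - eps). { apply HL2. intros r [x ->].
      destruct (Rle_lt_dec (G x) (L - eps)); auto. exfalso; apply Hn; exists x; auto. }
    destruct eps; simpl in *; lra. }
  destruct H as [x0 Hx0]. exists x0. intros x Hx. apply ball_R.
  assert (G x <= L) by (apply HL1; exists x; reflexivity).
  assert (G x0 <= G x) by (apply Hm; lra).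
  apply Rabs_lt_between'; lra.
Qed.

Lemma lim_minf G M : (forall x y, x <= y -> G x <= G y) -> (forall x, M <= G x) ->
  exists L, filterlim G (Rbar_locally m_infty) (locally L).
Proof.
  intros Hm Hb.
  destruct (lim_pinf (fun x => - G (- x)) (- M)) as [L HL].
  - intros x y Hxy. apply Ropp_le_contravar, Hm. lra.
  - intros x. specialize (Hb (-x)). lra.
  - exists (- L). apply filterlim_locally. intros eps.
    apply filterlim_locally with (eps := eps) in HL. destruct HL as [M0 HM0].
    exists (- M0). intros x Hx. specialize (HM0 (- x) ltac:(lra)).
    apply ball_R in HM0. apply ball_R. rewrite Ropp_involutive in HM0.
    replace (G x - - L) with (- (- G x - L)) by ring. rewrite Rabs_Ropp. exact HM0.
Qed.

Lemma le_lim_pinf G L : (forall x y, x <= y -> G x <= G y) ->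
  filterlim G (Rbar_locally p_infty) (locally L) -> forall x, G x <= L.
Proof.
  intros Hm HL x. destruct (Rle_lt_dec (G x) L) as [|Hlt]; auto.
  apply filterlim_locally with (eps := mkposreal _ (Rlt_Rminus _ _ Hlt)) in HL.
  destruct HL as [M0 HM0]. specialize (HM0 (Rmax (M0 + 1) x) ltac:(apply Rlt_le_trans with (M0+1); [lra|apply Rmax_l])).
  apply ball_R in HM0. simpl in HM0.
  assert (G x <= G (Rmax (M0 + 1) x)) by (apply Hm, Rmax_r).
  apply Rabs_lt_between' in HM0. lra.
Qed.

Lemma ge_lim_minf G L : (forall x y, x <= y -> G x <= G y) ->
  filterlim G (Rbar_locally m_infty) (locally L) -> forall x, L <= G x.
Proof.
  intros Hm HL x. destruct (Rle_lt_dec L (G x)) as [|Hlt]; auto.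
  apply filterlim_locally with (eps := mkposreal _ (Rlt_Rminus _ _ Hlt)) in HL.
  destruct HL as [M0 HM0]. specialize (HM0 (Rmin (M0 - 1) x) ltac:(apply Rle_lt_trans with (M0-1); [apply Rmin_l|lra])).
  apply ball_R in HM0. simpl in HM0.
  assert (G (Rmin (M0 - 1) x) <= G x) by (apply Hm, Rmin_r).
  apply Rabs_lt_between' in HM0. lra.
Qed.
Lemma lim_lin {T} (F : (T -> Prop) -> Prop) {FF : Filter F} (f g : T -> R) a b c :
  filterlim f F (locally a) -> filterlim g F (locally b) ->
  filterlim (fun x => f x + c * g x) F (locally (a + c * b)).
Proof.
  intros Hf Hg. apply filterlim_locally. intros eps.
  assert (He : 0 < eps / (2 * (Rabs c + 1))).
  { apply Rdiv_lt_0_compat; [apply cond_pos|]. pose proof (Rabs_pos c); lra. }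
  apply filterlim_locally with (eps := mkposreal _ He) in Hf.
  apply filterlim_locally with (eps := mkposreal _ He) in Hg.
  generalize (filter_and _ _ Hf Hg). apply filter_imp. intros x [H1 H2].
  change (Rabs (f x - a) < eps / (2 * (Rabs c + 1))) in H1.
  change (Rabs (g x - b) < eps / (2 * (Rabs c + 1))) in H2.
  apply ball_R.
  replace (f x + c * g x - (a + c * b)) with ((f x - a) + c * (g x - b)) by ring.
  eapply Rle_lt_trans; [apply Rabs_triang|]. rewrite Rabs_mult.
  assert (Rabs c * Rabs (g x - b) <= Rabs c * (eps / (2 * (Rabs c + 1)))).
  { apply Rmult_le_compat_l; [apply Rabs_pos| lra]. }
  assert (Rabs c * (eps / (2 * (Rabs c + 1))) + eps / (2 * (Rabs c + 1)) < eps).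
  { pose proof (Rabs_pos c). pose proof (cond_pos eps).
    replace (Rabs c * (eps / (2 * (Rabs c + 1))) + eps / (2 * (Rabs c + 1))) with (eps / 2) by (field; lra).
    lra. }
  lra.
Qed.

Lemma deriv_integral (F f : R -> R) Lm Lp : (forall x, is_derive F x (f x)) -> (forall x, continuous f x) ->
  filterlim F (Rbar_locally m_infty) (locally Lm) ->
  filterlim F (Rbar_locally p_infty) (locally Lp) -> integral_R f (Lp - Lm).
Proof.
  intros Hd Hc Hm Hp.
  assert (E : Derive F = f).
  { apply functional_extensionality; intro x; apply is_derive_unique, Hd. }
  unfold integral_R. rewrite <- E.
  apply (is_RInt_gen_Derive (Fa := Rbar_locally m_infty) (Fb := Rbar_locally p_infty)); auto.
  - apply filter_forall. intros ab x _. exists (f x); apply Hd.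
  - apply filter_forall. intros ab x _. rewrite E; apply Hc.
Qed.

Lemma integ_ex (f : R -> R) C : (forall x, continuous f x) -> (forall x, Rabs (f x) * (1 + x ^ 2) <= C) ->
  exists F Lm Lp, (forall x, is_derive F x (f x)) /\
    filterlim F (Rbar_locally m_infty) (locally Lm) /\
    filterlim F (Rbar_locally p_infty) (locally Lp) /\ integral_R f (Lp - Lm).
Proof.
  intros Hc HB.
  set (F := fun x : R => (RInt f 0 x : R)).
  assert (HF : forall x, is_derive F x (f x)).
  { intro x. apply is_derive_RInt with (a := 0); [|apply Hc].
    apply filter_forall. intro b. unfold F. apply (@RInt_correct R_CompleteNormedModule). apply (@ex_RInt_continuous R_CompleteNormedModule). intros; apply Hc. }
  assert (Hbd : forall x, - C * / (1 + x²) <= f x <= C * / (1 + x²)).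
  { intro x. assert (Hq : 0 < 1 + x²) by (pose proof (Rle_0_sqr x); lra).
    assert (Rabs (f x) <= C * / (1 + x²)).
    { apply Rmult_le_reg_r with (1 + x²); auto. rewrite Rmult_assoc, Rinv_l by lra.
      rewrite Rmult_1_r. replace (x²) with (x ^ 2) by (unfold Rsqr; ring). apply HB. }
    apply Rabs_le_between in H. lra. }
  assert (HC0 : 0 <= C). { specialize (HB 0). pose proof (Rabs_pos (f 0)). 
    replace (1 + 0 ^ 2) with 1 in HB by ring. lra. }
  set (G1 := fun x => F x + C * atan x).
  set (H := fun x => 2 * C * atan x - G1 x).
  assert (HG1 : forall x, is_derive G1 x (f x + C * / (1 + x²))).
  { intro x. apply (is_derive_plus F (fun x => C * atan x)); [apply HF|].
    apply is_derive_scal, is_derive_atan. }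
  assert (HH : forall x, is_derive H x (2 * C * / (1 + x²) - (f x + C * / (1 + x²)))).
  { intro x. apply (is_derive_minus (fun x => 2 * C * atan x) G1); [|apply HG1].
    apply is_derive_scal, is_derive_atan. }
  assert (MG1 : forall x y, x <= y -> G1 x <= G1 y).
  { apply (mono_deriv _ _ HG1). intro x. specialize (Hbd x). lra. }
  assert (MH : forall x y, x <= y -> H x <= H y).
  { apply (mono_deriv _ _ HH). intro x. specialize (Hbd x). lra. }
  assert (Matan : forall x y, x <= y -> atan x <= atan y).
  { apply (mono_deriv _ (fun x => / (1 + x²)) is_derive_atan). intro x.
    apply Rlt_le, Rinv_0_lt_compat. pose proof (Rle_0_sqr x); lra. }
  assert (PIpos := PI_RGT_0).
  assert (UB : forall x, G1 x <= C * PI - H 0).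
  { intro x. destruct (Rle_lt_dec 0 x) as [Hx|Hx].
    - assert (H 0 <= H x) by (apply MH; auto). pose proof (atan_bound x).
      unfold H in *. assert (C * atan x <= C * (PI / 2)) by (apply Rmult_le_compat_l; lra). lra.
    - assert (G1 x <= G1 0) by (apply MG1; lra). unfold H. rewrite atan_0.
      assert (0 <= C * PI) by (apply Rmult_le_pos; lra). lra. }
  assert (LB : forall x, - C * PI - H 0 <= G1 x).
  { intro x. destruct (Rle_lt_dec x 0) as [Hx|Hx].
    - assert (H x <= H 0) by (apply MH; auto). pose proof (atan_bound x).
      unfold H in *. assert (C * (- PI / 2) <= C * atan x) by (apply Rmult_le_compat_l; lra). lra.
    - assert (G1 0 <= G1 x) by (apply MG1; lra). unfold H in *. rewrite atan_0 in *.
      assert (0 <= C * PI) by (apply Rmult_le_pos; lra). lra. }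
  destruct (lim_pinf G1 _ MG1 UB) as [Gp HGp].
  destruct (lim_minf G1 _ MG1 LB) as [Gm HGm].
  destruct (lim_pinf atan (PI/2) Matan) as [Ap HAp].
  { intro x; pose proof (atan_bound x); lra. }
  destruct (lim_minf atan (- PI/2) Matan) as [Am HAm].
  { intro x; pose proof (atan_bound x); lra. }
  assert (EF : forall x, F x = G1 x + (- C) * atan x) by (intro; unfold G1; ring).
  assert (Hp : filterlim F (Rbar_locally p_infty) (locally (Gp + - C * Ap))).
  { eapply filterlim_ext. intro x; symmetry; apply EF. apply lim_lin; auto; apply Rbar_locally_filter. }
  assert (Hm : filterlim F (Rbar_locally m_infty) (locally (Gm + - C * Am))).
  { eapply filterlim_ext. intro x; symmetry; apply EF. apply lim_lin; auto; apply Rbar_locally_filter. }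
  exists F, (Gm + - C * Am), (Gp + - C * Ap). split; [exact HF|]. split; [exact Hm|]. split; [exact Hp|].
  apply deriv_integral with F; auto.
Qed.
Lemma integral_ext (f g : R -> R) a b : integral_R f a -> (forall x, f x = g x) -> b = a -> integral_R g b.
Proof.
  intros H E ->. replace g with f; auto. apply functional_extensionality; auto.
Qed.

Lemma integral_lin (f g : R -> R) a b c : integral_R f a -> integral_R g b ->
  integral_R (fun x => f x + c * g x) (a + c * b).
Proof.
  intros Hf Hg. unfold integral_R in *.
  apply (is_RInt_gen_plus (Fa := Rbar_locally m_infty) (Fb := Rbar_locally p_infty) f (fun x => c * g x) a (c * b)); auto.
  apply (is_RInt_gen_scal (Fa := Rbar_locally m_infty) (Fb := Rbar_locally p_infty) g c b); auto.
Qed.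

Lemma integral_unique (f : R -> R) a b : integral_R f a -> integral_R f b -> a = b.
Proof.
  intros Ha Hb. unfold integral_R in *.
  apply (@is_RInt_gen_unique R_CompleteNormedModule (Rbar_locally m_infty) (Rbar_locally p_infty) _ _) in Ha.
  apply (@is_RInt_gen_unique R_CompleteNormedModule (Rbar_locally m_infty) (Rbar_locally p_infty) _ _) in Hb.
  congruence.
Qed.

Lemma RD_bound f : RD f -> exists C, forall x, Rabs (f x) * (1 + x ^ 2) <= C.
Proof.
  intros H. destruct (H 0%nat) as [C0 H0]. destruct (H 2%nat) as [C2 H2].
  exists (C0 + C2). intro x. specialize (H0 x). specialize (H2 x).
  rewrite Rmult_plus_distr_l, Rmult_1_r.
  simpl pow in H0. rewrite Rmult_1_l in H0.
  rewrite Rabs_mult in H2. rewrite (Rabs_pos_eq (x^2)) in H2 by (apply pow2_ge_0).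
  lra.
Qed.

Lemma RD_decay f : RD f -> filterlim f (Rbar_locally p_infty) (locally 0) /\
                            filterlim f (Rbar_locally m_infty) (locally 0).
Proof.
  intros H. destruct (H 1%nat) as [C1 H1].
  assert (K : forall eps : posreal, forall x, (Rabs C1 + 1) / eps < Rabs x -> Rabs (f x - 0) < eps).
  { intros eps x Hx. specialize (H1 x). simpl pow in H1. rewrite Rmult_1_r, Rabs_mult in H1.
    pose proof (cond_pos eps). pose proof (Rabs_pos C1).
    assert (Hx' : Rabs C1 + 1 < eps * Rabs x).
    { apply Rmult_lt_compat_l with (r := eps) in Hx; auto.
      replace (eps * ((Rabs C1 + 1) / eps)) with (Rabs C1 + 1) in Hx by (field; lra). lra. }
    rewrite Rminus_0_r. apply Rnot_le_lt; intro Hn.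
    assert (eps * Rabs x <= Rabs (f x) * Rabs x).
    { apply Rmult_le_compat_r; auto. apply Rabs_pos. }
    rewrite Rmult_comm in H1. pose proof (Rle_abs C1). lra. }
  split; apply filterlim_locally; intro eps.
  - exists ((Rabs C1 + 1) / eps). intros x Hx. apply ball_R. apply K.
    pose proof (Rabs_pos C1). assert (0 < (Rabs C1 + 1) / eps).
    { apply Rdiv_lt_0_compat; [lra| apply cond_pos]. }
    rewrite (Rabs_pos_eq x); lra.
  - exists (- ((Rabs C1 + 1) / eps)). intros x Hx. apply ball_R. apply K.
    pose proof (Rabs_pos C1). assert (0 < (Rabs C1 + 1) / eps).
    { apply Rdiv_lt_0_compat; [lra| apply cond_pos]. }
    rewrite (Rabs_left x); lra.
Qed.

Lemma RD_integrable f : RD f -> (forall x, continuous f x) -> exists l, integral_R f l.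
Proof.
  intros H Hc. destruct (RD_bound f H) as [C HC].
  destruct (integ_ex f C Hc HC) as [F [Lm [Lp [_ [_ [_ HI]]]]]]. eauto.
Qed.

Lemma integral_pos f l x0 : RD f -> (forall x, continuous f x) -> (forall x, 0 <= f x) ->
  f x0 <> 0 -> integral_R f l -> 0 < l.
Proof.
  intros H Hc Hp Hx0 Hl. destruct (RD_bound f H) as [C HC].
  destruct (integ_ex f C Hc HC) as [F [Lm [Lp [Hd [Hm [Hpl HI]]]]]].
  rewrite (integral_unique _ _ _ Hl HI).
  assert (M := mono_deriv F f Hd Hp).
  assert (U := le_lim_pinf F Lp M Hpl).
  assert (Lw := ge_lim_minf F Lm M Hm).
  destruct (Req_dec Lm Lp) as [E|NE].
  - exfalso. apply Hx0.
    assert (Hcst : forall x, F x = Lp). { intro x. specialize (U x). specialize (Lw x). lra. }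
    assert (is_derive F x0 0).
    { apply is_derive_ext with (fun _ => Lp). intro; symmetry; auto. apply (is_derive_const Lp x0). }
    apply is_derive_unique in H0. rewrite (is_derive_unique _ _ _ (Hd x0)) in H0. auto.
  - specialize (U 0). specialize (Lw 0). lra.
Qed.
Lemma isd_mult (f g : R -> R) x a b : is_derive f x a -> is_derive g x b ->
  is_derive (fun y => f y * g y) x (a * g x + f x * b).
Proof. intros. apply (is_derive_mult f g); auto. intros; apply Rmult_comm. Qed.
Lemma isd_plus (f g : R -> R) x a b : is_derive f x a -> is_derive g x b ->
  is_derive (fun y => f y + g y) x (a + b).
Proof. intros. apply (is_derive_plus f g); auto. Qed.
Lemma isd_const (c x : R) : is_derive (fun _ => c) x 0.
Proof. apply (is_derive_const c x). Qed.
Lemma isd_id (x : R) : is_derive (fun y => y) x 1.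
Proof. apply (is_derive_id x). Qed.
Lemma isd_ext (f g : R -> R) x a b : is_derive f x a -> (forall y, f y = g y) -> a = b -> is_derive g x b.
Proof. intros H E ->. apply is_derive_ext with f; auto. Qed.

Inductive Poly : (R -> R) -> Prop :=
| Pc c : Poly (fun _ => c)
| Pid : Poly (fun x => x)
| Pp f g : Poly f -> Poly g -> Poly (fun x => f x + g x)
| Pm f g : Poly f -> Poly g -> Poly (fun x => f x * g x).

Lemma Poly_deriv P : Poly P -> exists P', Poly P' /\ forall x, is_derive P x (P' x).
Proof.
  induction 1 as [c| |f g _ [f' [Hf' Df]] _ [g' [Hg' Dg]]|f g Hf [f' [Hf' Df]] Hg [g' [Hg' Dg]]].
  - exists (fun _ => 0); split; [apply Pc|intro; apply isd_const].
  - exists (fun _ => 1); split; [apply Pc|intro; apply isd_id].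
  - exists (fun x => f' x + g' x); split; [apply Pp; auto|intro; apply isd_plus; auto].
  - exists (fun x => f' x * g x + f x * g' x); split.
    + apply Pp; apply Pm; auto.
    + intro; apply isd_mult; auto.
Qed.

Lemma Poly_pow m : Poly (fun x => x ^ m).
Proof. induction m; simpl. apply Pc. apply (Pm _ _ Pid IHm). Qed.

Lemma Poly_bound P : Poly P -> exists A N, 0 <= A /\ forall x, Rabs (P x) <= A * (1 + x ^ 2) ^ N.
Proof.
  assert (Q1 : forall x N, 1 <= (1 + x ^ 2) ^ N).
  { intros. apply pow_R1_Rle. pose proof (pow2_ge_0 x); lra. }
  assert (Qm : forall x N M, (N <= M)%nat -> (1 + x ^ 2) ^ N <= (1 + x ^ 2) ^ M).
  { intros. apply Rle_pow; auto. pose proof (pow2_ge_0 x); lra. }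
  induction 1 as [c| |f g _ [A1 [N1 [P1 H1]]] _ [A2 [N2 [P2 H2]]]|f g _ [A1 [N1 [P1 H1]]] _ [A2 [N2 [P2 H2]]]].
  - exists (Rabs c), 0%nat. split; [apply Rabs_pos|]. intro; simpl; lra.
  - exists 1, 1%nat. split; [lra|]. intro x. simpl. rewrite Rmult_1_r, Rmult_1_l.
    destruct (Rle_lt_dec 0 x); [rewrite Rabs_pos_eq | rewrite Rabs_left]; nra.
  - exists (A1 + A2), (N1 + N2)%nat. split; [lra|]. intro x.
    specialize (H1 x); specialize (H2 x).
    assert (A1 * (1 + x ^ 2) ^ N1 <= A1 * (1 + x ^ 2) ^ (N1 + N2)).
    { apply Rmult_le_compat_l; auto. apply Qm; lia. }
    assert (A2 * (1 + x ^ 2) ^ N2 <= A2 * (1 + x ^ 2) ^ (N1 + N2)).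
    { apply Rmult_le_compat_l; auto. apply Qm; lia. }
    eapply Rle_trans; [apply Rabs_triang|]. lra.
  - exists (A1 * A2), (N1 + N2)%nat. split; [apply Rmult_le_pos; auto|]. intro x.
    rewrite Rabs_mult, pow_add.
    replace (A1 * A2 * ((1 + x ^ 2) ^ N1 * (1 + x ^ 2) ^ N2)) with
      ((A1 * (1 + x ^ 2) ^ N1) * (A2 * (1 + x ^ 2) ^ N2)) by ring.
    apply Rmult_le_compat; auto; apply Rabs_pos.
Qed.

Lemma exp_pow_INR z N : exp z ^ N = exp (INR N * z).
Proof.
  induction N; simpl pow. simpl; rewrite Rmult_0_l, exp_0; auto.
  rewrite IHN, <- exp_plus, S_INR. f_equal; ring.
Qed.

Lemma lt_exp z : z < exp z.
Proof.
  destruct (Req_dec z 0) as [->|Hz]. rewrite exp_0; lra.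
  pose proof (exp_ineq1 z Hz). lra.
Qed.

Lemma exp_pow_bound N : exists K, forall y, 0 <= y -> (1 + y) ^ N <= K * exp y.
Proof.
  set (M := INR N + 1). assert (HM : 0 < M) by (unfold M; pose proof (pos_INR N); lra).
  exists (M ^ N * exp 1). intros y Hy.
  assert (E1 : (1 + y) ^ N = M ^ N * ((1 + y) / M) ^ N).
  { rewrite <- Rpow_mult_distr. f_equal. field. lra. }
  rewrite E1, Rmult_assoc. apply Rmult_le_compat_l. apply pow_le; lra.
  apply Rle_trans with (exp ((1 + y) / M) ^ N).
  { apply pow_incr. split. apply Rlt_le, Rdiv_lt_0_compat; lra. apply Rlt_le, lt_exp. }
  rewrite exp_pow_INR, <- exp_plus.
  cut (INR N * ((1 + y) / M) <= 1 + y).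
  { intro Hc. destruct (Rle_lt_or_eq_dec _ _ Hc) as [Hl|He]; [apply Rlt_le, exp_increasing; lra| rewrite He; lra]. }
  assert (Hz : 0 <= (1+y)/M) by (apply Rlt_le, Rdiv_lt_0_compat; lra).
  apply Rle_trans with (M * ((1+y)/M)). apply Rmult_le_compat_r; auto; unfold M; lra.
  right; field; lra.
Qed.

Lemma Poly_gauss_bound P : Poly P -> exists B, forall x, Rabs (P x * exp (- (x * x))) <= B.
Proof.
  intros HP. destruct (Poly_bound P HP) as [A [N [HA HB]]].
  destruct (exp_pow_bound N) as [K HK].
  exists (A * K). intro x.
  rewrite Rabs_mult, (Rabs_pos_eq (exp _)) by (apply Rlt_le, exp_pos).
  specialize (HK (x ^ 2) (pow2_ge_0 x)). specialize (HB x).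
  assert (Hp : 0 < exp (- (x * x))) by apply exp_pos.
  apply Rle_trans with (A * (1 + x ^ 2) ^ N * exp (- (x * x))).
  { apply Rmult_le_compat_r; lra. }
  apply Rle_trans with (A * (K * exp (x ^ 2)) * exp (- (x * x))).
  { apply Rmult_le_compat_r; [lra|]. apply Rmult_le_compat_l; auto. }
  replace (A * (K * exp (x ^ 2)) * exp (- (x * x))) with (A * K * (exp (x ^ 2) * exp (- (x * x)))) by ring.
  rewrite <- exp_plus. replace (x ^ 2 + - (x * x)) with 0 by ring. rewrite exp_0. lra.
Qed.

Definition AG (f : R -> R) := exists P, Poly P /\ forall x, f x = P x * exp (- (x * x)).

Lemma isd_gauss x : is_derive (fun x => exp (- (x * x))) x (- (2 * x) * exp (- (x * x))).
Proof. auto_derive; auto. ring. Qed.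

Lemma AG_Dcl : Dcl AG.
Proof.
  intros f [P [HP Ef]].
  destruct (Poly_deriv P HP) as [P' [HP' DP]].
  exists (fun x => (P' x + (fun _ => -2) x * (fun x => x) x * P x) * exp (- (x * x))). split.
  - exists (fun x => P' x + (fun _ => -2) x * (fun x => x) x * P x). split; [|auto].
    apply Pp; auto. apply Pm; auto. apply Pm. apply Pc. apply Pid.
  - intro x. eapply isd_ext. apply isd_mult. apply DP. apply isd_gauss.
    intro; symmetry; apply Ef. simpl; ring.
Qed.

Lemma AG_RD f : AG f -> RD f.
Proof.
  intros [P [HP Ef]] m.
  destruct (Poly_gauss_bound _ (Pm _ _ (Poly_pow m) HP)) as [B HB].
  exists B. intro x. rewrite Ef, <- Rmult_assoc. apply HB.
Qed.

Lemma AG_cont f : AG f -> forall x, continuous f x.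
Proof. intros H. apply (Dcl_cont AG f AG_Dcl H). Qed.

Lemma AG_scal f c : AG f -> AG (fun x => c * f x).
Proof.
  intros [P [HP Ef]]. exists (fun x => (fun _ => c) x * P x). split.
  apply Pm; auto. apply Pc. intro x; rewrite Ef; ring.
Qed.

Lemma AG_xk f k : AG f -> AG (fun x => x ^ k * f x).
Proof.
  intros [P [HP Ef]]. exists (fun x => (fun x => x ^ k) x * P x). split.
  apply Pm; auto. apply Poly_pow. intro x; rewrite Ef; ring.
Qed.

Lemma AG_plus f g : AG f -> AG g -> AG (fun x => f x + g x).
Proof.
  intros [P [HP Ef]] [Q [HQ Eg]]. exists (fun x => P x + Q x). split.
  apply Pp; auto. intro x; rewrite Ef, Eg; ring.
Qed.

Lemma AG_gauss : AG (fun x => exp (- (x * x))).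
Proof. exists (fun _ => 1). split. apply Pc. intro; ring. Qed.
Lemma integral_scal (f : R -> R) a c : integral_R f a -> integral_R (fun x => c * f x) (c * a).
Proof.
  intros Hf. unfold integral_R in *.
  apply (is_RInt_gen_scal (Fa := Rbar_locally m_infty) (Fb := Rbar_locally p_infty) f c a); auto.
Qed.

Lemma AG_ext f g : AG f -> (forall x, f x = g x) -> AG g.
Proof. intros H E. replace g with f; auto. apply functional_extensionality; auto. Qed.

Section U.
Variable h : R -> R.
Hypothesis Hh : AG h.
Hypothesis Hhb : forall x, Rabs (h x) <= / 8.

Definition Sq x := sqrt (1 + 4 * h x).
Definition V x := / Sq x.
Definition W x := / (1 + Sq x).

Lemma Sq_facts x : 0 < 1 + 4 * h x /\ Sq x * Sq x = 1 + 4 * h x /\ / 2 <= Sq x.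
Proof.
  specialize (Hhb x). apply Rabs_le_between in Hhb.
  assert (H1 : 0 < 1 + 4 * h x) by lra.
  assert (H2 : Sq x * Sq x = 1 + 4 * h x) by (apply sqrt_sqrt; lra).
  assert (H3 : 0 <= Sq x) by apply sqrt_pos.
  split; auto. split; auto. nra.
Qed.

Lemma V_deriv h' : (forall x, is_derive h x (h' x)) ->
  forall x, is_derive V x (-2 * h' x * (V x * (V x * V x))).
Proof.
  intros Hd x. destruct (Sq_facts x) as [H1 [H2 H3]].
  assert (D1 : is_derive (fun y => 1 + 4 * h y) x (0 + 4 * h' x)).
  { apply isd_plus. apply isd_const. apply is_derive_scal, Hd. }
  assert (D2 := is_derive_sqrt _ _ _ D1 H1).
  assert (D3 := is_derive_inv _ _ _ D2 ltac:(cbv beta; change (sqrt (1 + 4 * h x)) with (Sq x); lra)).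
  refine (isd_ext _ _ _ _ _ D3 _ _). intro; reflexivity.
  cbv beta; change (sqrt (1 + 4 * h x)) with (Sq x). unfold V. match goal with |- ?a = ?b => change (@eq R a b) end. field. lra.
Qed.

Lemma W_deriv h' : (forall x, is_derive h x (h' x)) ->
  forall x, is_derive W x (-2 * h' x * (V x * (W x * W x))).
Proof.
  intros Hd x. destruct (Sq_facts x) as [H1 [H2 H3]].
  assert (D1 : is_derive (fun y => 1 + 4 * h y) x (0 + 4 * h' x)).
  { apply isd_plus. apply isd_const. apply is_derive_scal, Hd. }
  assert (D2 := is_derive_sqrt _ _ _ D1 H1).
  assert (D4 : is_derive (fun y => 1 + sqrt (1 + 4 * h y)) x (0 + (0 + 4 * h' x) / (2 * sqrt (1 + 4 * h x)))).
  { apply isd_plus. apply isd_const. exact D2. }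
  assert (D3 := is_derive_inv _ _ _ D4 ltac:(cbv beta; change (sqrt (1 + 4 * h x)) with (Sq x); lra)).
  refine (isd_ext _ _ _ _ _ D3 _ _). intro; reflexivity.
  cbv beta; change (sqrt (1 + 4 * h x)) with (Sq x). unfold V, W. match goal with |- ?a = ?b => change (@eq R a b) end. field. lra.
Qed.

Inductive B : (R -> R) -> Prop :=
| Bc c : B (fun _ => c)
| Bg f : AG f -> B f
| BV : B V
| BW : B W
| Bp f g : B f -> B g -> B (fun x => f x + g x)
| Bm f g : B f -> B g -> B (fun x => f x * g x).

Lemma B_bounded f : B f -> exists M, forall x, Rabs (f x) <= M.
Proof.
  induction 1 as [c|f Hf| | |f g _ [M1 H1] _ [M2 H2]|f g _ [M1 H1] _ [M2 H2]].
  - exists (Rabs c); intro; lra.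
  - destruct (AG_RD f Hf 0%nat) as [C HC]. exists C. intro x. specialize (HC x).
    simpl pow in HC. rewrite Rmult_1_l in HC. auto.
  - exists 2. intro x. destruct (Sq_facts x) as [_ [_ H3]]. unfold V.
    rewrite Rabs_pos_eq by (apply Rlt_le, Rinv_0_lt_compat; lra).
    replace 2 with (/ / 2) by field. apply Rinv_le_contravar; lra.
  - exists 1. intro x. destruct (Sq_facts x) as [_ [_ H3]]. unfold W.
    rewrite Rabs_pos_eq by (apply Rlt_le, Rinv_0_lt_compat; lra).
    rewrite <- Rinv_1. apply Rinv_le_contravar; lra.
  - exists (M1 + M2). intro x. eapply Rle_trans; [apply Rabs_triang|]. specialize (H1 x); specialize (H2 x); lra.
  - exists (M1 * M2). intro x. rewrite Rabs_mult. apply Rmult_le_compat; auto; apply Rabs_pos.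
Qed.

Lemma B_Dcl : Dcl B.
Proof.
  destruct (AG_Dcl h Hh) as [h' [Hh' Dh]].
  intros f Hf. induction Hf as [c|f Hf| | |f g _ [f' [Bf' Df]] _ [g' [Bg' Dg]]|f g Hf [f' [Bf' Df]] Hg [g' [Bg' Dg]]].
  - exists (fun _ => 0). split; [apply Bc|intro; apply isd_const].
  - destruct (AG_Dcl f Hf) as [f' [Hf' Df]]. exists f'. split; auto. apply Bg; auto.
  - exists (fun x => -2 * h' x * (V x * (V x * V x))). split.
    + apply (Bm (fun x => -2 * h' x)). apply (Bm (fun _ => -2)). apply Bc. apply Bg; auto.
      apply (Bm V). apply BV. apply (Bm V V); apply BV.
    + apply V_deriv; auto.
  - exists (fun x => -2 * h' x * (V x * (W x * W x))). split.
    + apply (Bm (fun x => -2 * h' x)). apply (Bm (fun _ => -2)). apply Bc. apply Bg; auto.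
      apply (Bm V). apply BV. apply (Bm W W); apply BW.
    + apply W_deriv; auto.
  - exists (fun x => f' x + g' x). split. apply Bp; auto. intro; apply isd_plus; auto.
  - exists (fun x => f' x * g x + f x * g' x). split.
    apply Bp; apply Bm; auto. intro; apply isd_mult; auto.
Qed.

Inductive A : (R -> R) -> Prop :=
| Ab f b : AG f -> B b -> A (fun x => f x * b x)
| Ap f g : A f -> A g -> A (fun x => f x + g x).

Lemma A_Dcl : Dcl A.
Proof.
  intros f Hf. induction Hf as [f b Hf Hb|f g _ [f' [Af' Df]] _ [g' [Ag' Dg]]].
  - destruct (AG_Dcl f Hf) as [f' [Hf' Df]]. destruct (B_Dcl b Hb) as [b' [Hb' Db]].
    exists (fun x => f' x * b x + f x * b' x). split.
    apply Ap; apply Ab; auto. intro; apply isd_mult; auto.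
  - exists (fun x => f' x + g' x). split. apply Ap; auto. intro; apply isd_plus; auto.
Qed.

Lemma A_RD f : A f -> RD f.
Proof.
  induction 1 as [f b Hf Hb|f g _ H1 _ H2]; intro m.
  - destruct (AG_RD f Hf m) as [C HC]. destruct (B_bounded b Hb) as [M HM].
    exists (C * M). intro x. replace (x ^ m * (f x * b x)) with ((x ^ m * f x) * b x) by ring.
    rewrite Rabs_mult. apply Rmult_le_compat; auto; apply Rabs_pos.
  - destruct (H1 m) as [C1 HC1]. destruct (H2 m) as [C2 HC2]. exists (C1 + C2). intro x.
    rewrite Rmult_plus_distr_l. eapply Rle_trans; [apply Rabs_triang|].
    specialize (HC1 x); specialize (HC2 x); lra.
Qed.

Lemma A_ext f g : A f -> (forall x, f x = g x) -> A g.
Proof. intros H E. replace g with f; auto. apply functional_extensionality; auto. Qed.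

Definition u x := h x * (-2 * W x).

Lemma u_sq x : u x ^ 2 = u x + h x.
Proof.
  destruct (Sq_facts x) as [H1 [H2 H3]]. unfold u, W.
  assert (E : h x = (Sq x * Sq x - 1) / 4) by lra.
  rewrite E. field. lra.
Qed.

Lemma W_pos x : 0 < W x.
Proof. destruct (Sq_facts x) as [_ [_ H3]]. unfold W. apply Rinv_0_lt_compat; lra. Qed.

End U.
Definition gauss x := exp (- (x * x)).

Lemma AG_gn j : AG (Derive_n gauss j).
Proof. apply (Dcl_n AG gauss AG_Dcl AG_gauss j). Qed.

Lemma gn_step j x : is_derive (Derive_n gauss j) x (Derive_n gauss (S j) x).
Proof. apply (Dcl_step AG gauss AG_Dcl AG_gauss). Qed.

Lemma gauss_nz m : exists x, Derive_n gauss m x <> 0.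
Proof.
  apply Classical_Prop.NNPP. intro Hn.
  assert (Z : forall x, Derive_n gauss m x = 0).
  { intro x. apply Classical_Prop.NNPP. intro Hx. apply Hn. exists x; auto. }
  clear Hn. induction m as [|m IH].
  - specialize (Z 0). simpl in Z. unfold gauss in Z. pose proof (exp_pos (- (0 * 0))). lra.
  - apply IH. set (g := Derive_n gauss m).
    assert (Hd : forall t, is_derive g t zero).
    { intro t. pose proof (gn_step m t) as H. rewrite Z in H. exact H. }
    assert (Hc : forall x, g x = g 0).
    { intro x. destruct (Rtotal_order x 0) as [Hx|[->|Hx]].
      - apply (eq_is_derive g x 0); auto.
      - reflexivity.
      - symmetry. apply (eq_is_derive g 0 x); auto. }
    destruct (AG_RD _ (AG_gn m) 1%nat) as [C1 HC1].
    intro x. rewrite Hc. apply Classical_Prop.NNPP. intro Hg0.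
    assert (Ha : 0 < Rabs (g 0)) by (apply Rabs_pos_lt; auto).
    specialize (HC1 ((Rabs C1 + 1) / Rabs (g 0))). change (Derive_n gauss m) with g in HC1. rewrite (Hc ((Rabs C1 + 1) / Rabs (g 0))) in HC1.
    simpl pow in HC1. rewrite Rmult_1_r, Rabs_mult in HC1.
    rewrite (Rabs_pos_eq ((Rabs C1 + 1) / Rabs (g 0))) in HC1.
    + replace ((Rabs C1 + 1) / Rabs (g 0) * Rabs (g 0)) with (Rabs C1 + 1) in HC1 by (field; lra).
      pose proof (Rle_abs C1). lra.
    + apply Rlt_le, Rdiv_lt_0_compat; auto. pose proof (Rabs_pos C1); lra.
Qed.

Lemma moments_zero k : forall j, (k < j)%nat -> integral_R (fun x => x ^ k * Derive_n gauss j x) 0.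
Proof.
  induction k as [|k IH]; intros j Hkj; (destruct j as [|j]; [lia|]).
  - destruct (RD_decay _ (AG_RD _ (AG_gn j))) as [Lp Lm].
    apply integral_ext with (fun x => Derive_n gauss (S j) x) (0 - 0).
    + apply deriv_integral with (Derive_n gauss j); auto.
      apply gn_step. apply AG_cont, AG_gn.
    + intro; simpl; ring.
    + ring.
  - set (F := fun x => x ^ (S k) * Derive_n gauss j x).
    set (F' := fun x => INR (S k) * (x ^ k * Derive_n gauss j x) + x ^ (S k) * Derive_n gauss (S j) x).
    assert (AF : AG F) by (apply AG_xk, AG_gn).
    assert (AF' : AG F').
    { apply AG_plus. apply AG_scal, AG_xk, AG_gn. apply AG_xk, AG_gn. }
    assert (DF : forall x, is_derive F x (F' x)).
    { intro x. eapply isd_ext. apply isd_mult.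
      apply (is_derive_pow (fun y => y) (S k) x 1 (isd_id x)). apply gn_step.
      intro; reflexivity. unfold F'. simpl pred. match goal with |- ?a = ?b => change (@eq R a b) end. ring. }
    destruct (RD_decay _ (AG_RD _ AF)) as [Lp Lm].
    assert (I1 : integral_R F' (0 - 0)) by (apply deriv_integral with F; auto; apply AG_cont; auto).
    assert (I2 : integral_R (fun x => x ^ k * Derive_n gauss j x) 0) by (apply IH; lia).
    apply integral_ext with (fun x => F' x + (- INR (S k)) * (x ^ k * Derive_n gauss j x)) ((0 - 0) + (- INR (S k)) * 0).
    + apply integral_lin; auto.
    + intro x. unfold F'. ring.
    + ring.
Qed.
Theorem lemma1 (n : nat) :
  exists phi : R -> R,
    schwartz phi /\ (exists x : R, phi x <> 0) /\
    forall k : nat, (k <= n)%nat ->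
      exists a b c : R,
        integral_R (fun x => x ^ k * phi x) a /\
        integral_R (fun x => x ^ k * (phi x) ^ 2) b /\
        integral_R (fun x => (phi x) ^ 2) c /\
        a = b / c.
Proof.
  set (g := Derive_n gauss (S n)).
  assert (Ag : AG g) by apply AG_gn.
  destruct (AG_RD g Ag 0%nat) as [C HC].
  set (t := / (8 * (Rabs C + 1))).
  assert (Ht : 0 < t) by (unfold t; apply Rinv_0_lt_compat; pose proof (Rabs_pos C); lra).
  set (h := fun x => t * g x).
  assert (Ah : AG h) by (apply AG_scal; auto).
  assert (Hb : forall x, Rabs (h x) <= / 8).
  { intro x. unfold h. rewrite Rabs_mult, (Rabs_pos_eq t) by lra.
    specialize (HC x). simpl pow in HC. rewrite Rmult_1_l in HC.
    apply Rle_trans with (t * (Rabs C + 1)).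
    { apply Rmult_le_compat_l; [lra|]. pose proof (Rle_abs C); lra. }
    right. unfold t. field. pose proof (Rabs_pos C); lra. }
  assert (Mh : forall k, (k <= n)%nat -> integral_R (fun x => x ^ k * h x) 0).
  { intros k Hk. apply integral_ext with (fun x => t * (x ^ k * g x)) (t * 0).
    apply integral_scal. apply moments_zero; lia. intro; unfold h; ring. ring. }
  set (b0 := fun x => -2 * W h x).
  assert (Bb0 : B h b0). { apply (Bm h (fun _ => -2)). apply Bc. apply BW. }
  assert (Au : A h (u h)). { apply (Ab h h b0); auto. }
  assert (Auk : forall k, A h (fun x => x ^ k * u h x)).
  { intro k. apply A_ext with (fun x => (x ^ k * h x) * b0 x).
    apply Ab; auto. apply AG_xk; auto. intro; unfold u, b0; ring. }
  assert (Contk : forall k x, continuous (fun x => x ^ k * u h x) x).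
  { intros k. apply (Dcl_cont (A h) _ (A_Dcl h Ah Hb) (Auk k)). }
  destruct (RD_integrable (fun x => x ^ 0 * u h x) (A_RD h Hb _ (Auk 0%nat)) (Contk 0%nat)) as [a0 Ha0].
  assert (Hu2 : integral_R (fun x => x ^ 0 * u h x ^ 2) a0).
  { apply integral_ext with (fun x => x ^ 0 * u h x + 1 * (x ^ 0 * h x)) (a0 + 1 * 0).
    apply integral_lin; auto. apply Mh; lia.
    intro x; rewrite (u_sq h Hb x); ring. ring. }
  destruct (gauss_nz (S n)) as [x0 Hx0].
  assert (hx0 : h x0 <> 0). { unfold h. fold g in Hx0. intro E. apply Rmult_integral in E. destruct E; lra. }
  assert (ux0 : u h x0 <> 0).
  { unfold u. pose proof (W_pos h Hb x0). intro E. apply Rmult_integral in E. destruct E as [E|E]; [auto|lra]. }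
  assert (Hpos : 0 < a0).
  { apply (integral_pos (fun x => x ^ 0 * u h x ^ 2) a0 x0); auto.
    - apply (A_RD h Hb). apply A_ext with (fun x => h x * (h x * (4 * (W h x * W h x)))).
      apply Ab; auto. apply Bm. apply Bg; auto. apply Bm. apply Bc. apply Bm; apply BW.
      intro; unfold u; simpl; ring.
    - intro x. apply (@ex_derive_continuous R_AbsRing R_NormedModule).
      apply (ex_derive_ext (fun x => x ^ 0 * u h x + h x)).
      { intro; rewrite u_sq; auto; simpl; ring. }
      destruct (A_Dcl h Ah Hb _ (Auk 0%nat)) as [f1 [_ D1]]. destruct (AG_Dcl h Ah) as [f2 [_ D2]].
      exists (f1 x + f2 x). apply isd_plus; auto.
    - intro x. simpl. rewrite Rmult_1_l. apply pow2_ge_0.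
    - intro E. apply ux0. simpl in E. rewrite Rmult_1_r, Rmult_1_l in E. destruct (Rmult_integral _ _ E); auto. }
  exists (fun x => h x * ((-2 / a0) * W h x)). split; [|split].
  - apply (schwartz_of (A h)). apply A_Dcl; auto. apply A_RD; auto.
    apply Ab; auto. apply (Bm h (fun _ => -2 / a0)). apply Bc. apply BW.
  - exists x0. pose proof (W_pos h Hb x0). intro E. apply Rmult_integral in E. destruct E as [E|E]; [auto|].
    apply Rmult_integral in E. destruct E as [E|E]; [|lra].
    unfold Rdiv in E. apply Rmult_integral in E. destruct E as [E|E]. lra.
    pose proof (Rinv_0_lt_compat a0 Hpos). lra.
  - intros k Hk.
    destruct (RD_integrable _ (A_RD h Hb _ (Auk k)) (Contk k)) as [m Hm].
    assert (E : forall x, h x * (-2 / a0 * W h x) = / a0 * u h x) by (intro; unfold u; field; lra).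
    exists (/ a0 * m), (/ a0 ^ 2 * (m + 1 * 0)), (/ a0 ^ 2 * a0). split; [|split; [|split]].
    + apply integral_ext with (fun x => / a0 * (x ^ k * u h x)) (/ a0 * m).
      apply integral_scal; auto. intro x; rewrite E; ring. ring.
    + apply integral_ext with (fun x => / a0 ^ 2 * (x ^ k * u h x + 1 * (x ^ k * h x))) (/ a0 ^ 2 * (m + 1 * 0)).
      apply integral_scal. apply integral_lin; auto.
      intro x; rewrite E. rewrite Rpow_mult_distr, u_sq; auto. field; lra. reflexivity.
    + apply integral_ext with (fun x => / a0 ^ 2 * (x ^ 0 * u h x ^ 2)) (/ a0 ^ 2 * a0).
      apply integral_scal; auto. intro x; rewrite E, Rpow_mult_distr. simpl; field; lra. reflexivity.
    + field. lra.
Qed.
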